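(* Let $\mathcal{M}=(E,\mathcal{C})$ be a loopless oriented matroid with $E=\{e_1,\dots,e_m\}$ ordered $e_1\prec\cdots\prec e_m$, and let $1\le k\le m$. For every $(N_{k-1},A_{k-1})\in\mathscr{N}_{k-1}$, the pair $\psi_k(N_{k-1},A_{k-1})$ belongs to $\mathscr{N}_k$; i.e. $\psi_k:\mathscr{N}_{k-1}\to\mathscr{N}_k$ is well-defined.
   Context: A signed subset of a finite set $E$ is a pair $X=(X^+,X^-)$ of disjoint subsets; support $\underline{X}=X^+\cup X^-$, $-X=(X^-,X^+)$. An oriented matroid $\mathcal{M}=(E,\mathcal{C})$: a collection $\mathcal{C}$ of signed subsets with (C1) empty signed set not in $\mathcal{C}$; (C2) $\mathcal{C}=-\mathcal{C}$; (C3) $\underline{X}\subseteq\underline{Y}$ for $X,Y\in\mathcal{C}$ implies $X=\pm Y$; (C4) for $X,Y\in\mathcal{C}$, $X\neq\pm Y$, $e\in X^+\cap Y^-$ there is $Z\in\mathcal{C}$ with $Z^+\subseteq X^+\cup Y^+-\{e\}$, $Z^-\subseteq X^-\cup Y^--\{e\}$. Underlying matroid $\underline{\mathcal{M}}$: circuits $\underline{X}$, $X\in\mathcal{C}$; loopless means no one-element circuit. Positive circuit: $X^-=\emptyset$; acyclic: no positive circuit. Reorientation ${}_{-A}\mathcal{M}$ ($A\subseteq E$): signed circuits ${}_{-A}X=((X^+-A)\cup(X^-\cap A),(X^--A)\cup(X^+\cap A))$; ${}_{-e}={}_{-\{e\}}$. Deletion $\mathcal{M}\backslash X$ on $E-X$: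 signed circuits $Y\in\mathcal{C}$ with $\underline{Y}\subseteq E-X$. Contraction $\mathcal{M}/X$ on $E-X$: support-minimal nonempty members of $\{(Y^+-X,Y^--X):Y\in\mathcal{C},\underline{Y}-X\ne\emptyset\}$. Broken circuit: circuit of $\underline{\mathcal{M}}$ minus its $\prec$-maximal element; $\mathrm{NBC}(\underline{\mathcal{M}})$: subsets of $E$ containing no broken circuit. $E_k=\{e_1,\dots,e_k\}$; for $N_k\subseteq E_k$, $N_k^c=E_k-N_k$. $\mathscr{N}_k$ is the set of pairs $(N_k,A_k)$ with $N_k\subseteq E_k$, $A_k\subseteq E-E_k$, $N_k\in\mathrm{NBC}(\underline{\mathcal{M}})$, and $\mathcal{M}_k:={}_{-A_k}(\mathcal{M}\backslash N_k^c/N_k)$ acyclic. For $(N_{k-1},A_{k-1})\in\mathscr{N}_{k-1}$ with $\mathcal{M}_{k-1}={}_{-A_{k-1}}(\mathcal{M}\backslash N_{k-1}^c/N_{k-1})$: $\psi_k(N_{k-1},A_{k-1})=(N_{k-1}\cup\{e_k\},A_{k-1})$ if $e_k\notin A_{k-1}$ and ${}_{-e_k}\mathcal{M}_{k-1}$ is acyclic; $=(N_{k-1},A_{k-1})$ if $e_k\notin A_{k-1}$ and ${}_{-e_k}\mathcal{M}_{k-1}$ is not acyclic; $=(N_{k-1},A_{k-1}-\{e_k\})$ if $e_k\in A_{k-1}$. *)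

(* Defs.v *)
(* Ground set E = {e_1,...,e_m} is modelled as 'I_m, with
   e_(i+1) the ordinal i; the order e_1 < ... < e_m is the index order. *)
From mathcomp Require Import all_boot.
Set Implicit Arguments. Unset Strict Implicit. Unset Printing Implicit Defensive.

Section OM.
Variable m : nat.

(* signed subsets of E: pairs (X^+, X^-) *)
Definition sset := ({set 'I_m} * {set 'I_m})%type.

Definition supp (X : sset) : {set 'I_m} := X.1 :|: X.2.
Definition sopp (X : sset) : sset := (X.2, X.1).

Definition oriented_matroid (C : {set sset}) : Prop :=
  (forall X, X \in C -> [disjoint X.1 & X.2]) /\
  ((set0, set0) \notin C) /\
  (forall X, X \in C -> sopp X \in C) /\
  (forall X Y, X \in C -> Y \in C -> supp X \subset supp Y ->
      X = Y \/ X = sopp Y) /\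
  (forall X Y e, X \in C -> Y \in C -> X <> Y -> X <> sopp Y ->
      e \in X.1 :&: Y.2 ->
      exists2 Z, Z \in C &
        Z.1 \subset (X.1 :|: Y.1) :\ e /\ Z.2 \subset (X.2 :|: Y.2) :\ e).

Definition loopless (C : {set sset}) : Prop :=
  forall X, X \in C -> #|supp X| <> 1.

Definition acyclic (C : {set sset}) : bool :=
  [forall X in C, X.2 != set0].

Definition reor_sset (A : {set 'I_m}) (X : sset) : sset :=
  ((X.1 :\: A) :|: (X.2 :&: A), (X.2 :\: A) :|: (X.1 :&: A)).
Definition reor (A : {set 'I_m}) (C : {set sset}) : {set sset} :=
  [set reor_sset A X | X in C].

Definition del (C : {set sset}) (X : {set 'I_m}) : {set sset} :=
  [set Y in C | supp Y \subset ~: X].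

Definition contr_cands (C : {set sset}) (X : {set 'I_m}) : {set sset} :=
  [set (Y.1 :\: X, Y.2 :\: X) | Y in C & supp Y :\: X != set0].
Definition contr (C : {set sset}) (X : {set 'I_m}) : {set sset} :=
  [set Z in contr_cands C X | supp Z != set0 &
     [forall W in contr_cands C X, ~~ (supp W \proper supp Z)]].

Definition broken_circuit (C : {set sset}) (B : {set 'I_m}) : Prop :=
  exists2 X, X \in C &
    exists2 e, e \in supp X &
      (forall f, f \in supp X -> f <= e) /\ B = supp X :\ e.
Definition NBC (C : {set sset}) (N : {set 'I_m}) : Prop :=
  forall B, broken_circuit C B -> ~ (B \subset N).

(* E_j = {e_1, ..., e_j} *)
Definition Eset (j : nat) : {set 'I_m} := [set i : 'I_m | i < j].

Definition Mk (C : {set sset}) (j : nat) (N A : {set 'I_m}) : {set sset} :=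
  reor A (contr (del C (Eset j :\: N)) N).

Definition inNk (C : {set sset}) (j : nat) (N A : {set 'I_m}) : Prop :=
  N \subset Eset j /\ A \subset ~: Eset j /\ NBC C N /\ acyclic (Mk C j N A).

(* psi_k, where ek : 'I_m is the element e_k (so k = ek + 1 and
   E_{k-1} = Eset ek) *)
Definition psi (C : {set sset}) (ek : 'I_m) (N A : {set 'I_m})
  : {set 'I_m} * {set 'I_m} :=
  if ek \notin A then
    if acyclic (reor [set ek] (Mk C ek N A)) then (ek |: N, A) else (N, A)
  else (N, A :\ ek).

End OM.

(* Main.v *)
Require Import Defs.
From mathcomp Require Import all_boot.
Set Implicit Arguments. Unset Strict Implicit. Unset Printing Implicit Defensive.
Section S.
Variable m : nat.
Implicit Types (C : {set sset m}) (X Y Z W V R : sset m) (A D N T : {set 'I_m}).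

Lemma memcands C N Z : (Z \in contr_cands C N) <-> exists2 Y, Y \in C & (supp Y :\: N != set0 /\ Z = (Y.1 :\: N, Y.2 :\: N)).
Proof.
rewrite /contr_cands; split.
  case/imsetP => Y; rewrite inE => /andP[H1 H2] ->; by exists Y.
case=> Y H1 [H2 ->]; apply/imsetP; exists Y => //; by rewrite inE H1.
Qed.

Lemma supp_cut Y N : supp (Y.1 :\: N, Y.2 :\: N) = supp Y :\: N.
Proof. by rewrite /supp setDUl. Qed.

Lemma supp_sopp X : supp (sopp X) = supp X.
Proof. by rewrite /supp setUC. Qed.

Lemma supp_reor A X : supp (reor_sset A X) = supp X.
Proof.
apply/setP => x; rewrite /supp /reor_sset !inE.
by case: (x \in X.1); case: (x \in X.2); case: (x \in A).
Qed.

Lemma reor_sopp A X : reor_sset A (sopp X) = sopp (reor_sset A X).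
Proof. by []. Qed.

Lemma memdel C D Y : (Y \in del C D) = (Y \in C) && (supp Y \subset ~: D).
Proof. by rewrite inE. Qed.

Lemma memcontr C N Z : (Z \in contr C N) = [&& Z \in contr_cands C N, supp Z != set0 &
     [forall W in contr_cands C N, ~~ (supp W \proper supp Z)]].
Proof. by rewrite inE. Qed.

Lemma min_exists C N V : V \in contr_cands C N ->
  exists2 W, W \in contr C N & supp W \subset supp V.
Proof.
move: {2}#|supp V| (leqnn #|supp V|) => n; elim: n V => [|n IH] V Hn HV.
  have := HV; case/memcands => Y _ [Hne HVY]; move: Hne.
  by rewrite -supp_cut -HVY -cards_eq0 -leqn0 Hn.
case: (boolP [exists W in contr_cands C N, supp W \proper supp V]).
  case/exists_inP => W HW Hp.
  have [W' H1 H2] := IH W (leq_trans (proper_card Hp) Hn) HW.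
  exists W' => //; exact: subset_trans H2 (proper_sub Hp).
move=> Hno; exists V => //; rewrite memcontr HV /=.
apply/andP; split.
  by have := HV; case/memcands => Y _ [Hne ->]; rewrite supp_cut.
apply/forall_inP => W HW; apply/negP => Hp; move/negP: Hno; apply.
by apply/exists_inP; exists W.
Qed.

Definition oppcl C := forall X, X \in C -> sopp X \in C.
Definition disjcl C := forall X, X \in C -> [disjoint X.1 & X.2].

Lemma del_opp C D : oppcl C -> oppcl (del C D).
Proof. move=> H X; rewrite !memdel supp_sopp => /andP[H1 ->]; by rewrite H. Qed.

Lemma cands_opp C N : oppcl C -> oppcl (contr_cands C N).
Proof.
move=> H X /memcands [Y HY [Hne ->]]; apply/memcands; exists (sopp Y); first exact: H.
by rewrite supp_sopp.
Qed.

Lemma contr_opp C N : oppcl C -> oppcl (contr C N).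
Proof.
move=> H X; rewrite !memcontr supp_sopp => /and3P[H1 H2 H3].
by rewrite (cands_opp H) // H2 H3.
Qed.

Lemma reor_opp C A : oppcl C -> oppcl (reor A C).
Proof.
move=> H X /imsetP [Y HY ->]; rewrite -reor_sopp; apply/imsetP; exists (sopp Y) => //.
exact: H.
Qed.

Lemma disj_cut X N : [disjoint X.1 & X.2] -> [disjoint X.1 :\: N & X.2 :\: N].
Proof.
move=> H; rewrite -setI_eq0; move: H; rewrite -setI_eq0 => /eqP/setP H.
apply/eqP/setP => x; have := H x; rewrite !inE.
by case: (x \in X.1); case: (x \in X.2); case: (x \in N).
Qed.

Lemma disj_reor X A : [disjoint X.1 & X.2] -> [disjoint (reor_sset A X).1 & (reor_sset A X).2].
Proof.
move=> H; rewrite -setI_eq0; move: H; rewrite -setI_eq0 => /eqP/setP H.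
apply/eqP/setP => x; have := H x; rewrite /reor_sset !inE /=.
by case: (x \in X.1); case: (x \in X.2); case: (x \in A).
Qed.

Lemma del_disj C D : disjcl C -> disjcl (del C D).
Proof. move=> H X; rewrite memdel => /andP[H1 _]; exact: H. Qed.

Lemma cands_disj C N : disjcl C -> disjcl (contr_cands C N).
Proof. move=> H X /memcands [Y HY [_ ->]]; apply: disj_cut; exact: H. Qed.

Lemma contr_disj C N : disjcl C -> disjcl (contr C N).
Proof. move=> H X; rewrite memcontr => /and3P[H1 _ _]; exact: cands_disj H1. Qed.

Lemma reor_disj C A : disjcl C -> disjcl (reor A C).
Proof. move=> H X /imsetP [Y HY ->]; apply: disj_reor; exact: H. Qed.

Lemma acyc_both C : oppcl C -> acyclic C -> forall R, R \in C -> R.1 != set0 /\ R.2 != set0.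
Proof.
move=> Ho /forall_inP Ha R HR; split; last exact: Ha.
exact: (Ha _ (Ho _ HR)).
Qed.

Lemma acyc_single C x : oppcl C -> disjcl C -> acyclic C -> forall R, R \in C ->
   ~ (supp R \subset [set x]).
Proof.
move=> Ho Hd Ha R HR Hs.
have [/set0Pn [a Ha1] /set0Pn [b Hb2]] := acyc_both Ho Ha HR.
have := Hd _ HR; rewrite -setI_eq0 => /eqP/setP/(_ x); rewrite !inE.
move/subsetP: Hs => Hs.
have : a \in supp R by rewrite /supp inE Ha1.
move/Hs; rewrite inE => /eqP Ea.
have : b \in supp R by rewrite /supp inE Hb2 orbT.
move/Hs; rewrite inE => /eqP Eb.
by rewrite -{1}Ea -Eb Ha1 Hb2.
Qed.


Lemma loop_free C D N A x : oppcl C -> disjcl C ->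
  acyclic (reor A (contr (del C D) N)) ->
  forall V, V \in contr_cands (del C D) N -> supp V \subset [set x] -> False.
Proof.
move=> Ho Hd Ha V HV Hs.
have [W HW HWV] := min_exists HV.
have Ho' : oppcl (reor A (contr (del C D) N)) by apply/reor_opp/contr_opp/del_opp.
have Hd' : disjcl (reor A (contr (del C D) N)) by apply/reor_disj/contr_disj/del_disj.
apply: (acyc_single Ho' Hd' Ha (R := reor_sset A W)).
  by apply/imsetP; exists W.
by rewrite supp_reor; apply: subset_trans HWV Hs.
Qed.

Lemma circ_in_N C N X : (set0, set0) \notin C -> NBC C N -> X \in C -> supp X \subset N -> False.
Proof.
move=> H0 HN HX Hs.
have : supp X != set0.
  apply/negP; rewrite /supp setU_eq0 => /andP[/eqP H1 /eqP H2].
  have E : (set0, set0) = X by case: X H1 H2 HX {Hs} => ? ? /= -> ->.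
  by move: H0; rewrite E HX.
case/set0Pn => i0 Hi0.
case: (arg_maxnP (fun i : 'I_m => (i : nat)) Hi0) => e0 He0 Hmax.
apply: (HN (supp X :\ e0)); last by apply: subset_trans Hs; apply: subD1set.
by exists X => //; exists e0.
Qed.

Lemma contr_mono C D D' N Z : D \subset D' -> [disjoint N & D'] ->
  Z \in contr (del C D') N -> Z \in contr (del C D) N /\ supp Z \subset ~: D'.
Proof.
move=> HDD HND; rewrite memcontr => /and3P[Hc Hne /forall_inP Hmin].
have [Y HY [HYne HZ]] := (memcands _ _ _).1 Hc.
move: HY; rewrite memdel => /andP[HY HYD].
have HsZ : supp Z \subset ~: D'.
  by rewrite HZ supp_cut; apply: subset_trans (subsetDl _ _) HYD.
split => //.
rewrite memcontr Hne /=; apply/andP; split.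
  apply/memcands; exists Y => //; rewrite memdel HY /=.
  by apply: (subset_trans HYD); rewrite setCS.
apply/forall_inP => W HW; apply/negP => Hp.
have [Y' HY' [HY'ne HW']] := (memcands _ _ _).1 HW.
move: HY'; rewrite memdel => /andP[HY' HY'D].
have: W \in contr_cands (del C D') N.
  apply/memcands; exists Y' => //; rewrite memdel HY' /=.
  apply/subsetP => x Hx; case: (boolP (x \in N)) => HxN.
    rewrite inE; apply/negP => HxD.
    by move: HND; rewrite disjoint_subset => /subsetP/(_ x HxN); rewrite inE HxD.
  have : x \in supp W by rewrite HW' supp_cut inE HxN.
  by move/(subsetP (proper_sub Hp))/(subsetP HsZ).
by move/Hmin; rewrite Hp.
Qed.

Lemma reor_ext (A B : {set 'I_m}) X : (forall x, x \in supp X -> (x \in A) = (x \in B)) ->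
  reor_sset A X = reor_sset B X.
Proof.
move=> H; rewrite /reor_sset; congr pair; apply/setP => x; have := H x; rewrite /supp !inE;
by case: (x \in X.1); case: (x \in X.2) => /=; try move=> /(_ isT) ->; rewrite ?andbF.
Qed.


Lemma pair_contra M e f : oppcl M -> disjcl M -> acyclic M -> acyclic (reor [set e] M) ->
  forall R, R \in M -> supp R \subset [set e; f] -> False.
Proof.
move=> Ho Hd Ha Ha2.
have core : forall V, V \in M -> e \in V.2 -> supp V \subset [set e; f] -> False.
  move=> V HV He2 Hs.
  have [/set0Pn [a Ha1] _] := acyc_both Ho Ha HV.
  have HdV := Hd _ HV; move: HdV; rewrite -setI_eq0 => /eqP/setP Hdj.
  have Haf : a = f.
    have : a \in supp V by rewrite /supp inE Ha1.
    move/(subsetP Hs); rewrite !inE => /orP[/eqP Hae|/eqP //].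
    by have := Hdj a; rewrite !inE Ha1 Hae He2.
  move/forall_inP: Ha2 => /(_ (reor_sset [set e] V)) Hr.
  have : reor_sset [set e] V \in reor [set e] M by apply/imsetP; exists V.
  move/Hr; apply/negP; rewrite negbK; apply/eqP/setP => x; rewrite /reor_sset /= !inE.
  case: (eqVneq x e) => [->|Hxe] /=.
    by have := Hdj e; rewrite !inE He2 andbT => ->.
  rewrite andbF orbF; apply/negP => Hx2.
  have : x \in supp V by rewrite /supp inE Hx2 orbT.
  move/(subsetP Hs); rewrite !inE (negPf Hxe) /= => /eqP Hxf.
  by have := Hdj x; rewrite !inE Hx2 Hxf -Haf Ha1.
move=> R HR Hs.
have [/set0Pn [a Ha1] /set0Pn [b Hb2]] := acyc_both Ho Ha HR.
case: (boolP (e \in R.2)) => He2; first exact: core HR He2 Hs.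
case: (boolP (e \in R.1)) => He1.
  by apply: (core (sopp R) (Ho _ HR) He1); rewrite supp_sopp.
have HdR := Hd _ HR; move: HdR; rewrite -setI_eq0 => /eqP/setP/(_ f); rewrite !inE.
have : a \in supp R by rewrite /supp inE Ha1.
move/(subsetP Hs); rewrite !inE => /orP[/eqP Hae|/eqP Haf]; first by rewrite -Hae Ha1 in He1.
have : b \in supp R by rewrite /supp inE Hb2 orbT.
move/(subsetP Hs); rewrite !inE => /orP[/eqP Hbe|/eqP Hbf]; first by rewrite -Hbe Hb2 in He2.
by rewrite -{1}Haf -Hbf Ha1 Hb2.
Qed.


Lemma nbc_step C D N A (e : 'I_m) : oppcl C -> disjcl C -> NBC C N -> e \notin N -> e \notin D ->
  [disjoint N & D] -> (forall x : 'I_m, e < x -> x \notin D) ->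
  acyclic (reor A (contr (del C D) N)) ->
  acyclic (reor [set e] (reor A (contr (del C D) N))) -> NBC C (e |: N).
Proof.
move=> Ho Hd HN HeN HeD HND Hgt Ha Ha2 B [X HX [e0 He0 [Hmax HB]]] HBs.
have HBN : forall x, x \in B -> x \notin N -> x = e.
  move=> x Hx HxN; have := subsetP HBs x Hx; rewrite !inE (negPf HxN) orbF.
  by move/eqP.
have HeB : e \in B.
  apply/negPn/negP => HnB; apply: (HN B); first by exists X => //; exists e0.
  apply/subsetP => x Hx; apply/negPn/negP => HxN.
  have Exe := HBN x Hx HxN; by move: Hx; rewrite Exe (negPf HnB).
have := HeB; rewrite HB !inE => /andP[Hee0 HeX].
have {}HeX : e \in supp X by rewrite /supp inE.
have Hlt : e < e0.
  rewrite ltn_neqAle (Hmax _ HeX) andbT; apply: contra Hee0 => /eqP H.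
  by apply/eqP/val_inj.
idtac.
have HXD : X \in del C D.
  rewrite memdel HX /=; apply/subsetP => x Hx; rewrite inE.
  case: (eqVneq x e0) => [->|Hxe0]; first exact: Hgt.
  have HxB : x \in B by rewrite HB in_setD1 Hxe0 Hx.
  case: (boolP (x \in N)) => HxN; last by rewrite (HBN x HxB HxN).
  apply/negP => HxD; move: HND; rewrite disjoint_subset => /subsetP/(_ x HxN).
  by rewrite inE HxD.
have HV : (X.1 :\: N, X.2 :\: N) \in contr_cands (del C D) N.
  apply/memcands; exists X => //; split => //; apply/set0Pn; exists e.
  by rewrite inE HeN.
have [W HW HWV] := min_exists HV.
have Ho' : oppcl (reor A (contr (del C D) N)) by apply/reor_opp/contr_opp/del_opp.
have Hd' : disjcl (reor A (contr (del C D) N)) by apply/reor_disj/contr_disj/del_disj.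
apply: (pair_contra Ho' Hd' Ha Ha2 (R := reor_sset A W) (f := e0)).
  by apply/imsetP; exists W.
rewrite supp_reor; apply: (subset_trans HWV); rewrite supp_cut.
apply/subsetP => x; rewrite in_setD => /andP[HxN Hx].
case: (eqVneq x e0) => [->|Hxe0]; first by rewrite !inE eqxx orbT.
have HxB : x \in B by rewrite HB in_setD1 Hxe0 Hx.
rewrite !inE.
by rewrite (HBN x HxB HxN) eqxx.
Qed.


Lemma elim_supp Z P Q (y : 'I_m) : Z.1 \subset (P.1 :|: Q.1) :\ y ->
  Z.2 \subset (P.2 :|: Q.2) :\ y -> supp Z \subset (supp P :|: supp Q) :\ y.
Proof.
move=> S1 S2; apply/subsetP => x; rewrite /supp in_setU => /orP[/(subsetP S1)|/(subsetP S2)];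
rewrite !inE => /andP[-> H] /=; move: H; by case: (x \in P.1); case: (x \in P.2); case: (x \in Q.1); case: (x \in Q.2).
Qed.

Lemma acyc_step C D N A (e : 'I_m) T : oriented_matroid C -> NBC C N -> e \notin N -> e \notin A ->
  T = e |: N ->
  acyclic (reor A (contr (del C D) N)) ->
  acyclic (reor [set e] (reor A (contr (del C D) N))) ->
  acyclic (reor A (contr (del C D) T)).
Proof.
move=> HOM HN HeN HeA HT Ha Ha2.
have [Hd [H0 [Ho [_ Helim]]]] := HOM.
have Ho' : oppcl (reor A (contr (del C D) N)) by apply/reor_opp/contr_opp/del_opp.
have Hd' : disjcl (reor A (contr (del C D) N)) by apply/reor_disj/contr_disj/del_disj.
have HTe : forall x, x \in T -> x \notin N -> x = e.
  by move=> x; rewrite HT in_setU1 => /orP[/eqP|->].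
have HTN : forall x, x \notin T -> x \notin N.
  by move=> x; rewrite HT in_setU1 negb_or => /andP[].
have HeT : e \in T by rewrite HT in_setU1 eqxx.
have Hdp : forall X x, X \in C -> (x \in X.1) && (x \in X.2) = false.
  move=> X x HX; have := Hd _ HX; rewrite -setI_eq0 => /eqP/setP/(_ x).
  by rewrite !inE.
apply/forall_inP => X /imsetP [Z HZ ->]; apply/negP => /eqP Hpos.
move: HZ; rewrite memcontr => /and3P[Zc Zne /forall_inP Zmin].
have [Y0 HY0 [_ EZ]] := (memcands _ _ _).1 Zc.
suff: forall n Y, #|supp Y :\: N| < n -> Y \in del C D -> (Y.1 :\: T, Y.2 :\: T) = Z -> False.
  by move/(_ _ Y0 (ltnSn _) HY0 (esym EZ)).
elim=> [//|n IH] Y Hn HYd HYZ.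
have := HYd; rewrite memdel => /andP[HY HYD].
have HSZ : supp Z = supp Y :\: T by rewrite -HYZ supp_cut.
case: (boolP [exists W in contr_cands (del C D) N, supp W \proper supp (Y.1 :\: N, Y.2 :\: N)]).
  case/exists_inP => W HW Hp.
  have [Y' HY'd [HY'ne EW]] := (memcands _ _ _).1 HW.
  have := HY'd; rewrite memdel => /andP[HY' HY'D].
  rewrite EW !supp_cut in Hp.
  case: (boolP (supp Y' :\: T == set0)) => HYT.
    apply: (loop_free Ho Hd Ha HW (x := e)); rewrite EW supp_cut.
    apply/subsetP => x; rewrite in_setD => /andP[HxN Hx]; rewrite inE.
    apply/negPn/negP => Hxe; move/eqP/setP: HYT => /(_ x).
    rewrite in_setD Hx andbT in_set0; case: (boolP (x \in T)) => // HxT.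
    by rewrite (HTe x HxT HxN) eqxx in Hxe.
  have HZ'c : (Y'.1 :\: T, Y'.2 :\: T) \in contr_cands (del C D) T.
    by apply/memcands; exists Y'.
  have Hsub : supp Y' :\: T \subset supp Y :\: T.
    apply/subsetP => x; rewrite in_setD => /andP[HxT Hx].
    have : x \in supp Y' :\: N by rewrite in_setD Hx (HTN x HxT).
    move/(subsetP (proper_sub Hp)); rewrite in_setD => /andP[_ Hx'].
    by rewrite in_setD HxT.
  have Heq : supp Y' :\: T = supp Y :\: T.
    have := Zmin _ HZ'c; rewrite supp_cut HSZ properEneq Hsub andbT negbK.
    by move/eqP.
  have [HeY HeY'] : e \in supp Y /\ e \notin supp Y'.
    case/properP: Hp => _ [x Hx Hnx].
    have Hxe : x = e.
      move: Hx; rewrite in_setD => /andP[HxN Hx].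
      case: (boolP (x \in T)) => HxT; first exact: HTe.
      have : x \in supp Y :\: T by rewrite in_setD HxT.
      rewrite -Heq in_setD => /andP[_ Hx'].
      by rewrite in_setD HxN Hx' in Hnx.
    move: Hx Hnx; rewrite Hxe !in_setD HeN /= => -> //.
  case: (eqVneq (Y'.1 :\: T, Y'.2 :\: T) Z) => [EZ' | NZ'].
    apply: (IH Y') => //; apply: leq_trans (proper_card Hp) _; by rewrite -ltnS.
  case: (boolP [exists y, (y \notin T) && ((y \in Y.1) && (y \in Y'.2) || (y \in Y.2) && (y \in Y'.1))]); last first.
    move/existsPn => Hno; move/eqP: NZ'; apply; rewrite -HYZ.
    have H2 : supp Y' :\: T =i supp Y :\: T by rewrite Heq.
    congr pair; apply/setP => x; have := Hno x; have := H2 x;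
    have := Hdp _ x HY; have := Hdp _ x HY'; rewrite /supp !inE;
    case: (x \in T); case: (x \in Y.1); case: (x \in Y.2); case: (x \in Y'.1); case: (x \in Y'.2) => //.
  case/existsP => y /andP[HyT Hy].
  have HYY1 : Y <> Y' by move=> E; move: HeY; rewrite E (negPf HeY').
  have HYY2 : Y <> sopp Y' by move=> E; move: HeY; rewrite E supp_sopp (negPf HeY').
  have [Z'' HZ'' HsZ''] : exists2 Z'', Z'' \in C & supp Z'' \subset (supp Y :|: supp Y') :\ y.
    case/orP: Hy => /andP[Hy1 Hy2].
      have Hyy : y \in Y.1 :&: Y'.2 by rewrite inE Hy1 Hy2.
      have [Z'' HZ'' [S1 S2]] := Helim Y Y' y HY HY' HYY1 (fun E => HYY2 E) Hyy.
      by exists Z'' => //; apply: elim_supp.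
    have HYY3 : Y' <> Y by move=> E; apply: HYY1.
    have HYY4 : Y' <> sopp Y by move=> E; apply: HYY2; rewrite E; case: (Y).
    have Hyy : y \in Y'.1 :&: Y.2 by rewrite inE Hy1 Hy2.
    have [Z'' HZ'' [S1 S2]] := Helim Y' Y y HY' HY HYY3 HYY4 Hyy.
    by exists Z'' => //; rewrite setUC; apply: elim_supp.
  have HZ''D : supp Z'' \subset ~: D.
    apply/subsetP => x /(subsetP HsZ''); rewrite in_setD1 in_setU => /andP[_ /orP[/(subsetP HYD)|/(subsetP HY'D)]] //.
  have HZ''d : Z'' \in del C D by rewrite memdel HZ'' HZ''D.
  case: (boolP (supp Z'' :\: T == set0)) => HZT.
    have HZsT : forall x, x \in supp Z'' -> x \in T.
      move=> x Hx; apply/negPn/negP => HxT; move/eqP/setP: HZT => /(_ x).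
      by rewrite in_setD HxT Hx in_set0.
    case: (boolP (e \in supp Z'')) => HeZ.
      apply: (loop_free Ho Hd Ha (V := (Z''.1 :\: N, Z''.2 :\: N)) (x := e)).
        apply/memcands; exists Z'' => //; split => //; apply/set0Pn; exists e.
        by rewrite in_setD HeN.
      rewrite supp_cut; apply/subsetP => x; rewrite in_setD => /andP[HxN Hx].
      by rewrite inE (HTe x (HZsT x Hx) HxN).
    apply: (circ_in_N H0 HN HZ''); apply/subsetP => x Hx; apply/negPn/negP => HxN.
    by move: HeZ; rewrite -(HTe x (HZsT x Hx) HxN) Hx.
  have HZ3 : (Z''.1 :\: T, Z''.2 :\: T) \in contr_cands (del C D) T.
    by apply/memcands; exists Z''.
  have := Zmin _ HZ3; rewrite supp_cut HSZ => /negP; apply; apply/properP; split.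
    apply/subsetP => x; rewrite in_setD => /andP[HxT /(subsetP HsZ'')].
    rewrite in_setD1 in_setU => /andP[_ /orP[Hx|Hx]].
      by rewrite in_setD HxT Hx.
    by rewrite -Heq in_setD HxT Hx.
  exists y.
    rewrite in_setD HyT /supp in_setU; case/orP: Hy => /andP[-> _] //; by rewrite orbT.
  rewrite in_setD negb_and; apply/orP; right; apply/negP => /(subsetP HsZ'').
  by rewrite in_setD1 eqxx.
move=> Hno.
have HYN : supp Y :\: N != set0.
  move/set0Pn: Zne => [x]; rewrite HSZ in_setD => /andP[HxT Hx].
  by apply/set0Pn; exists x; rewrite in_setD (HTN x HxT) Hx.
have HZ1 : (Y.1 :\: N, Y.2 :\: N) \in contr (del C D) N.
  rewrite memcontr; apply/and3P; split.
  - by apply/memcands; exists Y.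
  - by rewrite supp_cut.
  - apply/forall_inP => W HW; apply/negP => Hp; move/negP: Hno; apply.
    by apply/exists_inP; exists W.
have Hdp' : forall X1 x, X1 \in reor A (contr (del C D) N) -> (x \in X1.1) && (x \in X1.2) = false.
  move=> X1 x HX; have := Hd' _ HX; rewrite -setI_eq0 => /eqP/setP/(_ x).
  by rewrite !inE.
rewrite -HYZ in Hpos.
set R := reor_sset A (Y.1 :\: N, Y.2 :\: N).
have HR : R \in reor A (contr (del C D) N) by apply/imsetP; exists (Y.1 :\: N, Y.2 :\: N).
have HR2 : forall x, x \in R.2 -> x = e.
  move=> x Hx; case: (boolP (x \in T)) => HxT.
    apply: HTe => //; move: Hx; rewrite /R /reor_sset /= !inE.
    case: (x \in N) => //=; by rewrite !andbF.
  move/setP: Hpos => /(_ x); move: Hx; rewrite /R /reor_sset /= !inE (negPf HxT) (negPf (HTN x HxT)) /=.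
  by move=> Hx Hp; rewrite Hx in Hp.
clearbody R.
have [/set0Pn [a Ha1] /set0Pn [b Hb2]] := acyc_both Ho' Ha HR.
have He2 : e \in R.2 by rewrite -(HR2 b Hb2).
have HR' : reor_sset [set e] R \in reor [set e] (reor A (contr (del C D) N)) by apply/imsetP; exists R.
move/forall_inP: Ha2 => /(_ _ HR') /set0Pn [z].
rewrite /reor_sset /= in_setU in_setD in_setI !in_set1 => /orP[/andP[Hze Hz2]|/andP[Hz1 /eqP Hze]].
  by rewrite (HR2 z Hz2) eqxx in Hze.
by rewrite Hze in Hz1; have := Hdp' _ e HR; rewrite Hz1 He2.
Qed.

End S.

Lemma inEset m j (x : 'I_m) : (x \in Eset m j) = (x < j).
Proof. by rewrite /Eset inE. Qed.

Theorem lemma2p3 (m : nat) (C : {set sset m}) (ek : 'I_m) :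
  oriented_matroid C -> loopless C ->
  forall N A : {set 'I_m},
    inNk C ek N A ->
    inNk C ek.+1 (psi C ek N A).1 (psi C ek N A).2.
Proof.
move=> HOM _ N A [HNE [HAE [HN Ha]]].
have [Hd [H0 [Ho _]]] := HOM.
have HeN : ek \notin N.
  by apply/negP => /(subsetP HNE); rewrite inEset ltnn.
set D := Eset m ek :\: N.
have HND : [disjoint N & D].
  by rewrite disjoint_subset; apply/subsetP => x Hx; rewrite !inE Hx.
have HNE1 : N \subset Eset m ek.+1.
  apply: (subset_trans HNE); apply/subsetP => x; rewrite !inEset; exact: ltnW.
have HD' : D \subset Eset m ek.+1 :\: N.
  by apply: setSD; apply/subsetP => x; rewrite !inEset; exact: ltnW.
have HND' : [disjoint N & Eset m ek.+1 :\: N].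
  by rewrite disjoint_subset; apply/subsetP => x Hx; rewrite !inE Hx.
have HA1 : forall x, x \in A -> x != ek -> x \notin Eset m ek.+1.
  move=> x HxA Hxe; have := subsetP HAE x HxA; rewrite inE inEset -leqNgt => Hge.
  rewrite inEset ltnS -ltnNge ltn_neqAle Hge andbT.
  by apply: contra Hxe => /eqP H; apply/eqP/val_inj.
have Hkeep : forall A', (forall Z, supp Z \subset ~: (Eset m ek.+1 :\: N) ->
    reor_sset A' Z = reor_sset A Z) -> acyclic (Mk C ek.+1 N A').
  move=> A' HA'; apply/forall_inP => X /imsetP [Z HZ ->].
  have [HZ1 HZ2] := contr_mono HD' HND' HZ.
  rewrite HA' //; move/forall_inP: Ha; apply; by apply/imsetP; exists Z.
have HekD' : ek \in Eset m ek.+1 :\: N by rewrite in_setD HeN inEset ltnSn.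
rewrite /psi; case: (boolP (ek \in A)) => HeA /=.
  split => //; split.
    apply/subsetP => x; rewrite in_setD1 => /andP[Hxe HxA]; rewrite inE; exact: HA1.
  split => //; apply: Hkeep => Z HZ; apply: reor_ext => x Hx.
  rewrite in_setD1; case: (eqVneq x ek) => // Hxe.
  by have := subsetP HZ x Hx; rewrite inE Hxe HekD'.
have HAE1 : A \subset ~: Eset m ek.+1.
  apply/subsetP => x HxA; rewrite inE; apply: HA1 => //.
  by apply: contraNneq HeA => <-.
case: ifP => Hac /=; last first.
  by split => //; split => //; split => //; apply: Hkeep.
have HeD : ek \notin D by rewrite in_setD inEset ltnn andbF.
split; first by rewrite subUset sub1set inEset ltnSn HNE1.
split => //; split.
  apply: (nbc_step (D := D) (A := A)) => //.
  by move=> x Hx; rewrite in_setD inEset ltnNge (ltnW Hx) andbF.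
rewrite /Mk; have -> : Eset m ek.+1 :\: (ek |: N) = D.
  apply/setP => x; rewrite !inE ltnS leq_eqVlt negb_or.
  case: (eqVneq x ek) => [->|Hxe] /=; first by rewrite ltnn andbF.
  suff -> : (x == ek :> nat) = false by [].
  by apply/negbTE; apply: contra Hxe => /eqP H; apply/eqP/val_inj.
exact: (acyc_step (T := ek |: N) HOM HN HeN HeA erefl Ha Hac).
Qed.
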